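(* The hereditary class property ''nowhere dense'' (the set of hereditary nowhere dense classes) is a decomposition horizon.
   Context: Graphs are finite and simple. For a graph $H$ and integer $p\ge0$, $H^{(p)}$ is obtained by replacing each edge of $H$ by a path of length $p+1$. A class $\mathscr C$ is nowhere dense if there is a function $f_\omega:\mathbb N\to\mathbb N$ such that whenever $H^{(p)}$ is a subgraph of a graph in $\mathscr C$, the clique number of $H$ is at most $f_\omega(p)$. A hereditary class is a class closed under isomorphism and induced subgraphs; a hereditary class property is a set $\Pi$ of hereditary classes closed under passing to hereditary subclasses. For non-decreasing $f$ and positive integer $p$, $\mathscr C$ has an $f$-bounded $\Pi$-decomposition with parameter $p$ if there is $\mathscr D_p\in\Pi$ such that every $G\in\mathscr C$ has a partition $V_1,\dots,V_N$ of $V(G)$, $N\le f(|G|)$, with $G[V_{i_1}\cup\dots\cup V_{i_p}]\in\mathscr D_p$ for all $i_1,\dots,i_p\in[N]$. $\Pi^\ast$ is the set of hereditary classes that, for every positive integer $p$, have such a decomposition for some non-decreasing $f$ with $f(n)=n^{o(1)}$. $\Pi$ is a decomposition horizon if $\Pi^\ast=\Pi$. *)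

(* Defs.v *)
From Stdlib Require Import Reals.
From mathcomp Require Import all_boot.

Set Implicit Arguments.
Unset Strict Implicit.
Unset Printing Implicit Defensive.

(* A finite simple graph: a finite vertex type with a raw relation; the edge
   relation is its symmetric, irreflexive closure, so every record is a simple
   graph and every simple graph arises this way. *)
Record graph := Graph { vert : finType; raw : rel vert }.

Definition edge (G : graph) : rel (vert G) :=
  fun x y => (x != y) && (raw x y || raw y x).

Definition order (G : graph) : nat := #|vert G|.

Definition subgraph (H G : graph) : Prop :=
  exists f : vert H -> vert G, injective f /\
    forall x y, edge x y -> edge (f x) (f y).

Definition induced_subgraph (H G : graph) : Prop :=
  exists f : vert H -> vert G, injective f /\
    forall x y, edge (f x) (f y) = edge x y.

Definition induced (G : graph) (S : {set vert G}) : graph :=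
  @Graph {x : vert G | x \in S} (fun x y => edge (val x) (val y)).

Definition is_clique (G : graph) (S : {set vert G}) : bool :=
  [forall x in S, forall y in S, (x != y) ==> edge x y].

Definition clique_number (G : graph) : nat :=
  \max_(S : {set vert G} | is_clique S) #|S|.

(* The p-subdivision H^(p): each edge uv (oriented so that
   enum_rank u < enum_rank v) is replaced by the path
   u - (uv,0) - (uv,1) - ... - (uv,p-1) - v of length p+1. *)
Definition sub_edge (H : graph) : pred (vert H * vert H) :=
  fun e => edge e.1 e.2 && (enum_rank e.1 < enum_rank e.2).

Definition sdv_type (H : graph) (p : nat) : finType :=
  (vert H + ({e : vert H * vert H | sub_edge e} * 'I_p))%type.

Definition sdv_rel (H : graph) (p : nat) : rel (sdv_type H p) :=
  fun a b =>
    match a, b with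
    | inl u, inl v => (p == 0) && edge u v
    | inl u, inr t | inr t, inl u =>
        ((u == (val t.1).1) && (val t.2 == 0)) ||
        ((u == (val t.1).2) && (val t.2 == p.-1))
    | inr s, inr t =>
        (s.1 == t.1) && ((val s.2).+1 == val t.2)
    end.

Definition subdivision (H : graph) (p : nat) : graph :=
  @Graph (sdv_type H p) (@sdv_rel H p).

Definition gclass := graph -> Prop.

Definition hereditary (C : gclass) : Prop :=
  forall G H : graph, C G -> induced_subgraph H G -> C H.

Definition nowhere_dense (C : gclass) : Prop :=
  exists fw : nat -> nat, forall (p : nat) (H G : graph),
    C G -> subgraph (subdivision H p) G -> clique_number H <= fw p.

Definition class_property := gclass -> Prop.

Definition hereditary_class_property (Pi : class_property) : Prop :=
  (forall C, Pi C -> hereditary C) /\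
  (forall C D, Pi C -> hereditary D -> (forall G, D G -> C G) -> Pi D).

Definition ND : class_property := fun C => hereditary C /\ nowhere_dense C.

(* f(n) = n^{o(1)}: for every eps > 0, eventually f(n) <= n^eps *)
Definition subpoly (f : nat -> nat) : Prop :=
  forall eps : R, Rlt R0 eps ->
    exists n0 : nat, forall n : nat, n0 <= n ->
      Rle (INR (f n)) (Rpower (INR n) eps).

Definition nondecreasing (f : nat -> nat) : Prop :=
  forall m n, m <= n -> f m <= f n.

(* C has an f-bounded Pi-decomposition with parameter p.  A partition
   V_1,...,V_N of V(G) is given by the map col : V(G) -> 'I_N
   (V_i = col^{-1}(i)); i_1,...,i_p is a map 'I_p -> 'I_N. *)
Definition has_decomposition (Pi : class_property) (C : gclass)
    (f : nat -> nat) (p : nat) : Prop :=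
  exists Dp : gclass, Pi Dp /\
    forall G : graph, C G ->
      exists (N : nat) (col : vert G -> 'I_N), N <= f (order G) /\
        forall idx : 'I_p -> 'I_N,
          Dp (induced [set v | col v \in codom idx]).

Definition Pi_star (Pi : class_property) : class_property :=
  fun C => hereditary C /\
    forall p : nat, 0 < p ->
      exists f : nat -> nat, nondecreasing f /\ subpoly f /\
        has_decomposition Pi C f p.

Definition decomposition_horizon (Pi : class_property) : Prop :=
  forall C : gclass, Pi_star Pi C <-> Pi C.

(* Main.v *)
From Stdlib Require Import Reals Lra Classical ClassicalEpsilon.
Require Import Defs.
From mathcomp Require Import all_boot zify.
Set Implicit Arguments.
Unset Strict Implicit.
Unset Printing Implicit Defensive.

Lemma edgeC (G : graph) (x y : vert G) : edge x y = edge y x.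
Proof. by rewrite /edge eq_sym orbC. Qed.

Lemma edge_neq (G : graph) (x y : vert G) : edge x y -> x != y.
Proof. by case/andP. Qed.

Lemma edge_induced (G : graph) (S : {set vert G}) (x y : vert (induced S)) :
  edge x y = edge (val x) (val y).
Proof.
rewrite {1}/edge /= edgeC orbb.
case E: (edge (val y) (val x)); last by rewrite andbF.
by rewrite andbT; apply/eqP => exy; move: (edge_neq E); rewrite exy eqxx.
Qed.

Lemma induced_ind (G : graph) (S : {set vert G}) : induced_subgraph (induced S) G.
Proof. exists val; split; [exact: val_inj | move=> x y; by rewrite edge_induced]. Qed.

Lemma subpoly1 : subpoly (fun _ => 1).
Proof.
move=> eps heps; exists 1 => n hn.
have h1 : Rle 1 (INR n) by apply: (le_INR 1); apply/leP.
apply: (Rle_trans _ (Rpower (INR n) R0)).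
  rewrite Rpower_O; [simpl; lra | lra].
apply: Rle_Rpower => //; lra.
Qed.

Lemma easy_dir (C : gclass) : ND C -> Pi_star ND C.
Proof.
case=> hC nC; split => // p _.
exists (fun _ => 1); split; first by [].
split; first exact: subpoly1.
exists C; split; first by [].
move=> G CG; exists 1, (fun _ => ord0); split => // idx.
exact: hC CG (induced_ind _).
Qed.

Section Paths.
Variables (H : graph) (r k : nat) (e : 'I_k -> vert H).
Hypothesis e_inj : injective e.
Hypothesis e_edge : forall x b, x != b -> edge (e x) (e b).

Definition lt_r x b := enum_rank (e x) < enum_rank (e b).
Definition opair x b : vert H * vert H := if lt_r x b then (e x, e b) else (e b, e x).
Definition pidx x b (i : nat) : nat := if lt_r x b then i.-1 else r - i.

Definition SE := {ed : vert H * vert H | sub_edge ed}.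

Definition P x b (i : 'I_r.+2) : vert (subdivision H r) :=
  if nat_of_ord i == 0 then inl (e x) else if nat_of_ord i == r.+1 then inl (e b) else
  match (insub (opair x b) : option SE), (insub (pidx x b i) : option 'I_r) with
  | Some s, Some j => inr (s, j)
  | _, _ => inl (e x)
  end.

Lemma lt_r_neq x b : x != b -> lt_r x b = ~~ lt_r b x.
Proof.
move=> nxb; rewrite /lt_r.
have hne : nat_of_ord (enum_rank (e x)) != enum_rank (e b).
  by apply: contra nxb => /eqP /val_inj /enum_rank_inj /e_inj ->.
move: hne; lia.
Qed.

Lemma opair_sub x b : x != b -> sub_edge (opair x b).
Proof.
move=> nxb; rewrite /sub_edge /opair.
case h: (lt_r x b) => /=; first by rewrite e_edge.
have : lt_r b x by rewrite lt_r_neq 1?eq_sym // h.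
by rewrite /lt_r => ->; rewrite e_edge // eq_sym.
Qed.

Lemma P0 x b : P x b ord0 = inl (e x).
Proof. by []. Qed.

Lemma Pmax x b : P x b ord_max = inl (e b).
Proof. by rewrite /P /= eqxx. Qed.

Lemma P_int x b (i : 'I_r.+2) : x != b -> 0 < i < r.+1 ->
  exists s j, P x b i = inr (s, j) /\ val s = opair x b /\ nat_of_ord j = pidx x b i.
Proof.
move=> nxb /andP [i0 ir].
have hs := opair_sub nxb.
have hj : pidx x b i < r by rewrite /pidx; case: (lt_r x b); lia.
exists (exist (fun ed => sub_edge ed) (opair x b) hs : SE), (Ordinal hj); split => //.
rewrite /P; have -> : (nat_of_ord i == 0) = false by lia.
have -> : (nat_of_ord i == r.+1) = false by lia.
by rewrite (insubT (fun ed => sub_edge ed) hs) (insubT (fun n => n < r) hj).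
Qed.

Lemma P_edge x b (i j : 'I_r.+2) : x != b -> nat_of_ord j = (nat_of_ord i).+1 ->
  edge (P x b i) (P x b j).
Proof.
move=> nxb hij.
have exb : e x != e b by apply: contra nxb => /eqP /e_inj ->.
rewrite /edge /=.
case: (posnP r) => [r0 | rpos].
  have i0 : nat_of_ord i = 0 by have := ltn_ord j; lia.
  have j1 : nat_of_ord j = r.+1 by lia.
  rewrite /P i0 j1 /= eqxx r0 /= e_edge // orTb andbT.
  by apply: contra exb => /eqP [] ->.
case: (posnP (nat_of_ord i)) => [i0 | ipos].
  have [s [t [-> [hs ht]]]] : exists s t, P x b j = inr (s, t) /\ val s = opair x b /\ nat_of_ord t = pidx x b j.
    by apply: P_int => //; lia.
  rewrite /P i0 /=.
  move: hs ht; rewrite /opair /pidx hij i0.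
  case: (lt_r x b) => hs ht; rewrite /sdv_rel hs /= ht eqxx /=; first by [].
  have -> : r - 1 == r.-1 by lia.
  by rewrite orbT.
case: (ltnP (nat_of_ord i) r) => ir.
  have [s [t [-> [hs ht]]]] : exists s t, P x b i = inr (s, t) /\ val s = opair x b /\ nat_of_ord t = pidx x b i.
    by apply: P_int => //; lia.
  have [s' [t' [-> [hs' ht']]]] : exists s t, P x b j = inr (s, t) /\ val s = opair x b /\ nat_of_ord t = pidx x b j.
    by apply: P_int => //; lia.
  have ss : s = s' by apply: val_inj; rewrite hs hs'.
  subst s'.
  move: ht ht'; rewrite /pidx hij.
  case: (lt_r x b) => ht ht'.
    have htt : (nat_of_ord t).+1 == t' by lia.
    rewrite /sdv_rel eqxx htt /= andbT.
    by apply/negP => /eqP [] htt2; rewrite htt2 in htt; lia.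
  have htt : (nat_of_ord t').+1 == t by lia.
  rewrite /sdv_rel eqxx htt /= orbT andbT.
  by apply/negP => /eqP [] htt2; rewrite htt2 in htt; lia.
have ir' : nat_of_ord i = r by have := ltn_ord j; lia.
have jr : nat_of_ord j = r.+1 by lia.
have [s [t [-> [hs ht]]]] : exists s t, P x b i = inr (s, t) /\ val s = opair x b /\ nat_of_ord t = pidx x b i.
  by apply: P_int => //; lia.
rewrite /P jr /= eqxx /=.
move: hs ht; rewrite /opair /pidx ir'.
case: (lt_r x b) => hs ht; rewrite /sdv_rel hs /= ht eqxx /=.
  by rewrite eqxx !orbT.
by rewrite subnn eqxx.
Qed.

Lemma P_end x b (j : 'I_r.+2) : ~~ (0 < j < r.+1) -> exists v, P x b j = inl v.
Proof.
move=> hj; rewrite /P.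
case: eqP => [_|h0]; first by eexists.
case: eqP => [_|h1]; first by eexists.
by have := ltn_ord j; lia.
Qed.

Lemma P_int_neq x b (i : 'I_r.+2) v : x != b -> 0 < i < r.+1 -> P x b i != inl v.
Proof. by move=> nxb hi; have [s [t [-> _]]] := P_int nxb hi. Qed.

Lemma P_inj x b x' b' (i j : 'I_r.+2) : x != b -> x' != b' -> 0 < i < r.+1 ->
  P x b i = P x' b' j -> (x = x' /\ b = b' /\ i = j) \/ (x = b' /\ b = x').
Proof.
move=> nxb nxb' hi.
have [s [t [-> [hs ht]]]] := P_int nxb hi.
case hj: (0 < j < r.+1); last first.
  by have [v ->] := P_end x' b' (negbT hj).
have [s' [t' [-> [hs' ht']]]] := P_int nxb' hj.
case=> ess ett; subst s'; subst t'.
move: hs' ht' ht; rewrite hs /opair /pidx => hs' ht' ht.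
move: hs'; case: (lt_r x b) ht ht'; case: (lt_r x' b') => ht ht' [] /e_inj h1 /e_inj h2; subst.
- by left; split => //; split => //; apply: ord_inj; move: hj; lia.
- by right.
- by right.
- by left; split => //; split => //; apply: ord_inj; move: hj; lia.
Qed.

End Paths.

Lemma leq_expl a b e : a <= b -> a ^ e <= b ^ e.
Proof. by move=> hab; elim: e => // e IH; rewrite !expnS leq_mul. Qed.

Lemma pigeon (I : finType) (i0 : I) (F : I -> nat) :
  exists i, \sum_j F j <= #|I| * F i.
Proof.
case: (@arg_maxnP I i0 predT F isT) => i _ hmax.
exists i; rewrite -sum_nat_const.
by apply: leq_sum => j _; apply: hmax.
Qed.

Lemma card_sum (I : finType) (B : {set I}) (P : pred I) :
  \sum_(b in B) (P b : nat) = #|[set b in B | P b]|.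
Proof.
rewrite -sum1_card.
rewrite big_mkcond /= [RHS]big_mkcond /=.
apply: eq_bigr => b _; rewrite !inE.
by case: (b \in B); case: (P b).
Qed.

Lemma card_sumT (I : finType) (P : pred I) :
  \sum_b (P b : nat) = #|[set b | P b]|.
Proof.
rewrite -sum1_card [RHS]big_mkcond /=.
apply: eq_bigr => b _; rewrite !inE.
by case: (P b).
Qed.

Lemma sum_partition (I T : finType) (A : {set I}) (g : I -> T) :
  \sum_t #|[set x in A | g x == t]| = #|A|.
Proof.
rewrite -sum1_card (partition_big g predT) //=.
apply: eq_bigr => t _; rewrite -sum1_card.
by apply: eq_bigl => x; rewrite !inE.
Qed.

Section Greedy.
Variables (k m D : nat) (B0 : {set 'I_k}) (X : 'I_k -> {set 'I_k}).
Hypothesis hD : forall b, b \in B0 -> D <= #|X b|.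
Hypothesis hDm : 0 < D - m.
Hypothesis hB0 : 0 < #|B0|.

Lemma greedy i : i <= m -> exists A B : {set 'I_k},
  [/\ #|A| = i, B \subset B0, (forall b, b \in B -> A \subset X b) &
      #|B0| * (D - m) ^ i <= k ^ i * #|B|].
Proof.
elim: i => [_|i IH hi].
  exists set0, B0; split => //; first by rewrite cards0.

  - by move=> b _; rewrite sub0set.
  - by rewrite expn0 expn0 muln1 mul1n.
have [A [B [hA hBB hAX hcnt]]] := IH (ltnW hi).
have Bpos : 0 < #|B|.
  have : 0 < #|B0| * (D - m) ^ i by rewrite muln_gt0 hB0 expn_gt0 hDm.
  move=> h; move: (leq_trans h hcnt); rewrite muln_gt0; by case/andP.
have [b0 b0B] : exists b, b \in B by apply/set0Pn; rewrite -card_gt0.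
pose F x := \sum_(b in B) ((x \notin A) && (x \in X b) : nat).
have hsum : #|B| * (D - m) <= \sum_x F x.
  rewrite /F exchange_big /= -sum_nat_const.
  apply: leq_sum => b bB.
  rewrite (card_sumT (fun x => (x \notin A) && (x \in X b))).
  have -> : [set x | (x \notin A) && (x \in X b)] = X b :\: A.
    by apply/setP => x; rewrite !inE.
  rewrite cardsD.
  have h1 : #|X b :&: A| <= i by rewrite -hA subset_leq_card // subsetIr.
  have h2 := hD (subsetP hBB b bB).
  lia.
have [x hx] := pigeon b0 F.
rewrite card_ord in hx.
have Fpos : 0 < F x.
  have : 0 < #|B| * (D - m) by rewrite muln_gt0 Bpos hDm.
  move=> h; move: (leq_trans h (leq_trans hsum hx)); rewrite muln_gt0; by case/andP.
have xA : x \notin A.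
  apply/negP => xA; move: Fpos; rewrite /F big1 // => b _; by rewrite xA.
exists (x |: A), [set b in B | x \in X b]; split.
- by rewrite cardsU1 xA hA.
- by apply: subset_trans hBB; apply/subsetP => b; rewrite inE => /andP [].
- move=> b; rewrite inE => /andP [bB xb]; rewrite subUset sub1set xb.
  exact: hAX.
- have -> : #|[set b in B | x \in X b]| = F x.
    rewrite /F -card_sum; apply: eq_bigr => b _; by rewrite xA.
  rewrite !expnSr mulnA.
  apply: (leq_trans (leq_mul hcnt (leqnn _))).
  have kpos : 0 < k by apply: leq_ltn_trans (ltn_ord b0).
  rewrite -mulnA -mulnA leq_pmul2l ?expn_gt0 ?kpos //.
  by apply: leq_trans hx; rewrite mulnC; apply: leq_trans hsum; rewrite mulnC.
Qed.
End Greedy.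

Lemma numeric k M m D B0 : 0 < M -> k <= M * B0 -> k <= M * D.+1 ->
  2 ^ m.+1 * (m.+1) ^ 2 * M ^ m.+1 <= k ->
  [/\ 0 < D - m, 0 < B0 & m * m * k ^ m <= B0 * (D - m) ^ m].
Proof.
move=> M0 hB hD hk.
have XY : 0 < 2 ^ m * M ^ m by rewrite muln_gt0 !expn_gt0 M0.
move: hk; rewrite (expnS 2 m) (expnS M m).
set X := 2 ^ m; set Y := M ^ m => hk.
have Xp : 0 < X by rewrite expn_gt0.
have Yp : 0 < Y by rewrite expn_gt0 M0.
have h1 : 2 * M * m.+1 <= k.
  apply: leq_trans hk.
  have : m.+1 <= m.+1 ^ 2 by rewrite expnS expn1 leq_pmull.
  move=> hm2; rewrite mulnAC.
  apply: leq_mul; last exact: leq_pmulr.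
  apply: leq_mul => //; exact: leq_pmulr.
have h2 : k <= 2 * (M * (D - m)) by nia.
have kpos : 0 < k by nia.
have Dm : 0 < D - m by nia.
split => //; first by nia.
have hK : k ^ m <= X * Y * (D - m) ^ m.
  by rewrite /X /Y -!expnMn; apply: leq_expl; rewrite -mulnA.
set K := k ^ m in hK *; set Z := (D - m) ^ m in hK *.
have : X * (M * Y) * (m * m * K) <= X * (M * Y) * (B0 * Z).
  have s1 : X * (M * Y) * (m * m * K) <= k * K.
    rewrite mulnA leq_mul2r; apply/orP; right.
    apply: leq_trans hk; nia.
  apply: leq_trans s1 _.
  have s2 : k * K <= (M * B0) * (X * Y * Z) by apply: leq_mul.
  apply: (leq_trans s2); rewrite eq_leq //; nia.
by rewrite leq_pmul2l // muln_gt0 Xp muln_gt0 M0 Yp.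
Qed.

Lemma count_main k m (T : finType) (t0 : T) (tau : 'I_k -> 'I_k -> T) :
  2 ^ m.+1 * (m.+1) ^ 2 * #|T| ^ m.+1 <= k ->
  exists t (A B : {set 'I_k}), [/\ #|A| = m, m * m <= #|B| &
    forall x b, x \in A -> b \in B -> x != b /\ tau x b = t].
Proof.
move=> hk.
have M0 : 0 < #|T| by apply/card_gt0P; exists t0.
pose cnt b t := #|[set x in [set~ b] | tau x b == t]|.
pose ts b := [arg max_(t > t0) cnt b t].
pose B0 t := [set b in [set: 'I_k] | ts b == t].
have [t ht] := pigeon t0 (fun t => #|B0 t|).
rewrite /B0 sum_partition cardsT card_ord in ht.
pose X b := [set x in [set~ b] | tau x b == t].
pose D := k.-1 %/ #|T|.
have hD : forall b, b \in B0 t -> D <= #|X b|.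
  move=> b; rewrite inE => /andP [_ /eqP hb].
  have hmax : forall t', cnt b t' <= cnt b t.
    move=> t'; rewrite -hb /ts; case: arg_maxnP => // t1 _ h1; exact: h1.
  have hs : k.-1 <= #|T| * cnt b t.
    have := sum_partition [set~ b] (fun x => tau x b).
    rewrite cardsC1 card_ord => <-.
    rewrite -sum_nat_const; apply: leq_sum => t' _; exact: hmax.
  rewrite /D /X -/(cnt b t).
  by rewrite -(mulKn (cnt b t) M0) leq_div2r.
have hD1 : k <= #|T| * D.+1.
  have := ltn_ceil k.-1 M0; rewrite -/D mulnC; case: (k) => //.
have [Dm B0pos hmain] := numeric M0 ht hD1 hk.
have [A [B [hA hBB hAX hcnt]]] := greedy hD Dm B0pos (leqnn m).
exists t, A, B; split => //.
  have kpos : 0 < k ^ m.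
    by rewrite expn_gt0 (leq_trans _ hk) // !muln_gt0 !expn_gt0 M0.
  rewrite -(leq_pmul2r kpos); apply: (leq_trans hmain).
  by apply: (leq_trans hcnt); rewrite mulnC.
move=> x b xA bB.
have := subsetP (hAX b bB) x xA.
by rewrite !inE => /andP [-> /eqP].
Qed.







Definition Km (m : nat) : graph := @Graph 'I_m (fun _ _ => true).

Lemma Km_edge m (i j : 'I_m) : @edge (Km m) i j = (i != j).
Proof. by rewrite /edge /= andbT. Qed.

Lemma Km_clique m : m <= clique_number (Km m).
Proof.
have Hcl : is_clique [set: vert (Km m)].
  apply/forallP => x; apply/implyP => _; apply/forallP => y; apply/implyP => _.
  by apply/implyP => hxy; rewrite Km_edge.
have h := @leq_bigmax_cond _ (fun S : {set vert (Km m)} => is_clique S) (fun S => #|S|) _ Hcl.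
move: h; rewrite cardsT /= card_ord; exact.
Qed.

Section Embed.
Variables (G0 : graph) (r k m N : nat) (beta : 'I_k -> vert G0).
Variable (pi : 'I_k -> 'I_k -> 'I_r.+2 -> vert G0) (col : vert G0 -> 'I_N).
Hypothesis beta_inj : injective beta.
Hypothesis hpi0 : forall x b, pi x b ord0 = beta x.
Hypothesis hpimax : forall x b, pi x b ord_max = beta b.
Hypothesis hpie : forall x b (i j : 'I_r.+2), x != b ->
  nat_of_ord j = (nat_of_ord i).+1 -> edge (pi x b i) (pi x b j).
Hypothesis hpii : forall x b x' b' (i j : 'I_r.+2), x != b -> x' != b' ->
  0 < i < r.+1 -> pi x b i = pi x' b' j -> (x = x' /\ b = b' /\ i = j) \/ (x = b' /\ b = x').
Hypothesis hpib : forall x b (i : 'I_r.+2) y, x != b -> 0 < i < r.+1 -> pi x b i != beta y.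
Variables (t0 : 'I_r.+2 -> 'I_N) (A B : {set 'I_k}).
Hypothesis hA : #|A| = m.
Hypothesis hB : #|{: 'I_m * 'I_m}| <= #|B|.
Hypothesis hAB : forall x b, x \in A -> b \in B -> x != b /\ forall i, col (pi x b i) = t0 i.

Definition a (i : 'I_m) : 'I_k := enum_val (cast_ord (esym hA) i).
Lemma aA i : a i \in A. Proof. exact: enum_valP. Qed.
Lemma a_inj : injective a.
Proof. by move=> i j /enum_val_inj /cast_ord_inj. Qed.

Definition SEm := {ed : 'I_m * 'I_m | @sub_edge (Km m) ed}.
Definition bidx (s : SEm) : 'I_k := enum_val (widen_ord hB (enum_rank (val s))).
Lemma bidxB s : bidx s \in B. Proof. exact: enum_valP. Qed.
Lemma bidx_inj : injective bidx.
Proof. by move=> s s' /enum_val_inj /(f_equal val) /= /ord_inj /enum_rank_inj /val_inj. Qed.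

Lemma SEm_neq (s : SEm) : (val s).1 != (val s).2.
Proof. by case: s => [[i j]] /= /andP []; rewrite Km_edge. Qed.

Definition psi0 (v : vert (subdivision (Km m) (r + r).+1)) : vert G0 :=
  match v with
  | inl i => beta (a i)
  | inr (s, q) => if nat_of_ord q < r.+1 then pi (a (val s).1) (bidx s) (inord q.+1)
                  else pi (a (val s).2) (bidx s) (inord ((r + r).+1 - q))
  end.

Lemma psi0_first s (q : 'I_(r + r).+1) : q <= r ->
  psi0 (inr (s, q)) = pi (a (val s).1) (bidx s) (inord q.+1).
Proof. by move=> hq; rewrite /= ltnS hq. Qed.

Lemma psi0_second s (q : 'I_(r + r).+1) : r <= q ->
  psi0 (inr (s, q)) = pi (a (val s).2) (bidx s) (inord ((r + r).+1 - q)).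
Proof.
move=> hq; rewrite /=; case: ifP => h; last by [].
have qr : nat_of_ord q = r by lia.
have -> : (inord q.+1 : 'I_r.+2) = ord_max by apply: ord_inj; rewrite inordK /=; lia.
have -> : (inord ((r + r).+1 - q) : 'I_r.+2) = ord_max by apply: ord_inj; rewrite inordK /=; lia.
by rewrite !hpimax.
Qed.

Lemma psi0_inr s (q : 'I_(r + r).+1) : exists X (I : 'I_r.+2),
  [/\ psi0 (inr (s, q)) = pi X (bidx s) I, X \in A, 0 < I <= r.+1,
      (nat_of_ord I = r.+1 -> nat_of_ord q = r) &
      (if q <= r then X = a (val s).1 /\ nat_of_ord I = q.+1
       else X = a (val s).2 /\ nat_of_ord I = (r + r).+1 - q)].
Proof.
case: (leqP q r) => hq.
  exists (a (val s).1), (inord q.+1); rewrite psi0_first // inordK; last lia.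
  by split; [by [] | exact: aA | lia | lia | idtac].
have hq' := ltn_ord q.
exists (a (val s).2), (inord ((r + r).+1 - q)); rewrite psi0_second ?inordK; try lia.
by split; [by [] | exact: aA | lia | lia | idtac].
Qed.

Lemma ord_max_eq (I : 'I_r.+2) : nat_of_ord I = r.+1 -> I = ord_max.
Proof. by move=> h; apply: ord_inj. Qed.

Lemma psi0_inj : injective psi0.
Proof.
have notend : forall x b (I : 'I_r.+2) y, x \in A -> b \in B -> 0 < I <= r.+1 ->
    pi x b I = beta y -> y = b.
  move=> x b I y xA bB hI h.
  have [nxb _] := hAB xA bB.
  case: (eqVneq (nat_of_ord I) r.+1) => hIr.
    by move: h; rewrite (ord_max_eq hIr) hpimax => /beta_inj.
  have hI2 : 0 < I < r.+1 by lia.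
  by move: (hpib y nxb hI2); rewrite h eqxx.
move=> [i|[s q]] [i'|[s' q']].
- by move=> /= /beta_inj /a_inj ->.
- move=> h; have [X [I [e XA hI _ _]]] := psi0_inr s' q'.
  move: h; rewrite e /= => /esym /(notend _ _ _ _ XA (bidxB s') hI) hai.
  by have [] := hAB (aA i) (bidxB s'); rewrite hai eqxx.
- move=> h; have [X [I [e XA hI _ _]]] := psi0_inr s q.
  move: h; rewrite e /= => /(notend _ _ _ _ XA (bidxB s) hI) hai.
  by have [] := hAB (aA i') (bidxB s); rewrite hai eqxx.
have [X [I [e XA hI hIr hc]]] := psi0_inr s q.
have [X' [I' [e' XA' hI' hIr' hc']]] := psi0_inr s' q'.
rewrite e e' => h.
have [nX _] := hAB XA (bidxB s).
have [nX' _] := hAB XA' (bidxB s').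
case: (eqVneq (nat_of_ord I) r.+1) => hIm.
  move: h; rewrite (ord_max_eq hIm) hpimax => h.
  case: (eqVneq (nat_of_ord I') r.+1) => hIm'.
    move: h; rewrite (ord_max_eq hIm') hpimax => /beta_inj /bidx_inj ss; subst s'.
    have qq : q = q' by apply: ord_inj; rewrite hIr // hIr'.
    by rewrite qq.
  have hI2 : 0 < I' < r.+1 by lia.
  by move: (hpib (bidx s) nX' hI2); rewrite -h eqxx.
have hI2 : 0 < I < r.+1 by lia.
case: (hpii nX nX' hI2 h) => [[xx [ll II]] | [xl lx]].
  move: ll => /bidx_inj ss; subst s' X' I'.
  move: hc hc'; case: (leqP q r) => hq; case: (leqP q' r) => hq'.
  - by move=> [_ h1] [_ h2]; have -> : q = q' by apply: ord_inj; lia.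
  - by move=> [h1 _] [h2 _]; move: h1; rewrite h2 => /a_inj /eqP; rewrite eq_sym (negPf (SEm_neq s)).
  - by move=> [h1 _] [h2 _]; move: h1; rewrite h2 => /a_inj /eqP; rewrite (negPf (SEm_neq s)).
  - by move=> [_ h1] [_ h2]; have -> : q = q' by apply: ord_inj; have := ltn_ord q; have := ltn_ord q'; lia.
by have [] := hAB XA (bidxB s'); rewrite xl eqxx.
Qed.

Lemma psi0_rel (u v : ('I_m + (SEm * 'I_(r + r).+1))%type) :
  @sdv_rel (Km m) (r + r).+1 u v -> edge (psi0 u) (psi0 v).
Proof.
have lr : forall i s (q : 'I_(r + r).+1),
    ((i == (val s).1) && (q == 0 :> nat)) || ((i == (val s).2) && (q == (r + r).+1.-1 :> nat)) ->
    edge (psi0 (inl i)) (psi0 (inr (s, q))).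
  move=> i s q /orP [/andP [/eqP -> /eqP hq] | /andP [/eqP -> /eqP hq]].
    rewrite psi0_first; last lia.
    rewrite /= hq -(hpi0 _ (bidx s)); apply: (@hpie _ _ ord0 (inord 1)); first by have [] := hAB (aA (val s).1) (bidxB s).
    by rewrite inordK.
  rewrite psi0_second; last lia.
  have -> : (inord ((r + r).+1 - q) : 'I_r.+2) = inord 1 by congr inord; lia.
  rewrite /= -(hpi0 _ (bidx s)); apply: (@hpie _ _ ord0 (inord 1)); first by have [] := hAB (aA (val s).2) (bidxB s).
  by rewrite inordK.
case: u => [i|[s q]]; case: v => [i'|[s' q']].
- by [].
- exact: lr.
- by move=> h; rewrite edgeC; apply: lr.
move=> /andP [/eqP ss0 /eqP hq0].
have ss : s = s' := ss0.
have hq : (nat_of_ord q).+1 = q' := hq0.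
subst s'.
have [nX _] := hAB (aA (val s).1) (bidxB s).
have [nX' _] := hAB (aA (val s).2) (bidxB s).
case: (ltnP q r) => hqr.
  rewrite !psi0_first; try lia.
  by apply: hpie => //; rewrite !inordK; lia.
rewrite !psi0_second; try lia.
rewrite edgeC; apply: hpie => //; have := ltn_ord q'; rewrite !inordK; lia.
Qed.

Lemma psi0_in v : psi0 v \in [set w | col w \in codom t0].
Proof.
rewrite inE.
case: v => [i|[s q]].
  have : 0 < #|B|.
    apply: leq_trans hB; rewrite card_prod card_ord muln_gt0; by case: (m) i => [[]|].
  move=> /card_gt0P [l lB].
  rewrite /= -(hpi0 _ l); have [_ ->] := hAB (aA i) lB; exact: codom_f.
have [X [I [-> XA _ _ _]]] := psi0_inr s q.
have [_ ->] := hAB XA (bidxB s); exact: codom_f.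
Qed.

Lemma embed : subgraph (subdivision (Km m) (r + r).+1) (induced [set w | col w \in codom t0]).
Proof.
exists (fun v => Sub (psi0 v) (psi0_in v)); split.
  by move=> u v /(f_equal val) /= /psi0_inj.
move=> u v; rewrite edge_induced /= /edge /= => /andP [_ /orP [h|h]].
  by have := psi0_rel h; rewrite /edge.
by have := psi0_rel h; rewrite edgeC /edge.
Qed.

End Embed.

Lemma INR_expn N j : INR (N ^ j) = pow (INR N) j.
Proof.
elim: j => [|j IH]; first by rewrite expn0.
by rewrite expnS -multE mult_INR IH.
Qed.

Lemma real_bound N n a : 0 < a -> 0 < n ->
  Rle (INR N) (Rpower (INR n) (Rinv (INR (4 * a)))) -> N ^ (4 * a) <= n.
Proof.
move=> apos npos h.
have a4 : Rlt 0 (INR (4 * a)) by apply: lt_0_INR; apply/ltP; lia.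
have n0 : Rlt 0 (INR n) by apply: lt_0_INR; apply/ltP.
set x := Rpower (INR n) (Rinv (INR (4 * a))) in h.
have xpos : Rlt 0 x by rewrite /x /Rpower; apply: exp_pos.
have h2 : Rle (pow (INR N) (4 * a)) (pow x (4 * a)).
  by apply: pow_incr; split => //; apply: pos_INR.
have h3 : pow x (4 * a) = INR n.
  rewrite -Rpower_pow // /x Rpower_mult Rinv_l; last lra.
  by rewrite Rpower_1.
rewrite -INR_expn h3 in h2.
by apply/leP; apply: INR_le.
Qed.

Lemma not_nd_witness (C : gclass) : ~ nowhere_dense C -> exists r, forall b,
  exists H G, C G /\ subgraph (subdivision H r) G /\ b < clique_number H.
Proof.
move=> hn; apply: NNPP => hall; apply: hn.
have h : forall r, exists b, forall H G, C G -> subgraph (subdivision H r) G -> clique_number H <= b.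
  move=> r; apply: NNPP => hr; apply: hall; exists r => b; apply: NNPP => hb; apply: hr.
  exists b => H G CG sg; apply: NNPP => hc; apply: hb; exists H, G; split => //; split => //.
  by rewrite ltnNge; apply/negP.
exists (fun r => proj1_sig (constructive_indefinite_description _ (h r))) => p H G CG sg.
exact: (proj2_sig (constructive_indefinite_description _ (h p)) H G CG sg).
Qed.

Lemma hard_dir (C : gclass) : Pi_star ND C -> ND C.
Proof.
case=> hC hdec; split => //.
apply: NNPP => nnd.
have [r hr] := not_nd_witness nnd.
have [f [_ [fsub [Dp [[hDp [fw' hfw']] hdecD]]]]] := hdec r.+2 isT.
set m := (fw' (r + r).+1).+1.
set a := r.+2 * m.+1.
set c := 2 ^ m.+1 * (m.+1) ^ 2.
have apos : 0 < a by [].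
have epos : Rlt R0 (Rinv (INR (4 * a))).
  by apply: Rinv_0_lt_compat; apply: lt_0_INR; apply/ltP; lia.
have [n0 hn0] := fsub _ epos.
have [H [G [CG [[phi [phi_inj phi_e]] hcl]]]] := hr (maxn n0 (c ^ 4 * r.+2)).
pose Q := [arg max_(S > set0 | @is_clique H S) #|S|].
have cl0 : @is_clique H set0.
  by apply/forallP => x; apply/implyP; rewrite inE.
have [hQ hQmax] : is_clique Q /\ clique_number H = #|Q|.
  rewrite /clique_number (bigmax_eq_arg set0) //; split => //.
  by rewrite /Q; case: arg_maxnP.
rewrite hQmax in hcl.
set k := #|Q| in hcl.
pose e (x : 'I_k) : vert H := enum_val x.
have e_inj : injective e by move=> x y /enum_val_inj.
have e_edge : forall x b, x != b -> edge (e x) (e b).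
  move=> x b nxb.
  have := forallP hQ (e x); rewrite enum_valP => /= /forallP /(_ (e b)).
  rewrite enum_valP /= => /implyP; apply.
  by apply: contra nxb => /eqP /e_inj ->.
pose W : {set vert G} := [set phi (P e t.1.1 t.1.2 t.2) | t : 'I_k * 'I_k * 'I_r.+2].
have Wm : forall x b i, phi (P e x b i) \in W.
  by move=> x b i; apply/imsetP; exists (x, b, i).
pose G' := induced W.
have CG' : C G' := hC _ _ CG (induced_ind W).
pose pi' x b i : vert G' := Sub (phi (P e x b i)) (Wm x b i).
pose beta' x := pi' x x ord0.
have hpi0 : forall x b, pi' x b ord0 = beta' x by move=> x b; apply: val_inj.
have hpimax : forall x b, pi' x b ord_max = beta' b.
  by move=> x b; apply: val_inj; rewrite /= Pmax.
have beta_inj : injective beta'.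
  by move=> x y /(f_equal val) /= /phi_inj [] /e_inj.
have hpie : forall x b (i j : 'I_r.+2), x != b ->
    nat_of_ord j = (nat_of_ord i).+1 -> edge (pi' x b i) (pi' x b j).
  move=> x b i j nxb hij; rewrite edge_induced /=; apply: phi_e.
  exact: P_edge.
have hpii : forall x b x' b' (i j : 'I_r.+2), x != b -> x' != b' ->
    0 < i < r.+1 -> pi' x b i = pi' x' b' j -> (x = x' /\ b = b' /\ i = j) \/ (x = b' /\ b = x').
  move=> x b x' b' i j nxb nxb' hi /(f_equal val) /= /phi_inj h.
  exact: P_inj h.
have hpib : forall x b (i : 'I_r.+2) y, x != b -> 0 < i < r.+1 -> pi' x b i != beta' y.
  move=> x b i y nxb hi; apply/negP => /eqP /(f_equal val) /= /phi_inj h.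
  by move: (P_int_neq e_inj e_edge (e y) nxb hi); rewrite h /= eqxx.
have hord : Defs.order G' <= k * k * r.+2.
  rewrite /Defs.order /= card_sig.
  have -> : #|[pred x | x \in W]| = #|W| by apply: eq_card => x.
  apply: leq_trans (leq_imset_card _ _) _.
  by rewrite !card_prod !card_ord.
have kord : k <= Defs.order G'.
  by have := leq_card beta' beta_inj; rewrite card_ord.
have [N [col [hN hD]]] := hdecD G' CG'.
have kpos : 0 < k by move: hcl; lia.
pose x0 : 'I_k := Ordinal kpos.
pose T := {ffun 'I_r.+2 -> 'I_N}.
have cardT : #|T| = N ^ r.+2 by rewrite card_ffun !card_ord.
have hnum : c * #|T| ^ m.+1 <= k.
  rewrite cardT -expnM -/a.
  have nn0 : n0 <= Defs.order G' by apply: leq_trans kord; move: hcl; lia.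
  have hf := hn0 _ nn0.
  have hNf : Rle (INR N) (INR (f (Defs.order G'))) by apply: le_INR; apply/leP.
  have hNn := real_bound apos (leq_trans kpos kord) (Rle_trans _ _ _ hNf hf).
  rewrite leqNgt; apply/negP => hlt.
  have h4 : k ^ 4 < c ^ 4 * N ^ (4 * a).
    by rewrite (mulnC 4 a) expnM -expnMn ltn_exp2r.
  have h5 : c ^ 4 * N ^ (4 * a) <= c ^ 4 * (k * k * r.+2).
    by rewrite leq_mul2l (leq_trans hNn hord) orbT.
  have h6 : c ^ 4 * r.+2 < k by move: hcl; lia.
  have h7 := leq_trans h4 h5.
  move: h6 h7; set z := c ^ 4 => h6 h7.
  have e1 : z * (k * k * r.+2) = (z * r.+2) * (k * k) by rewrite [k * k * _]mulnC mulnA.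
  have kk : 0 < k * k by rewrite muln_gt0 kpos.
  have h8 : (z * r.+2) * (k * k) < k * (k * k) by rewrite ltn_pmul2r.
  have h9 : k * (k * k) <= k ^ 4 by rewrite !expnS expn0 muln1 leq_pmull.
  rewrite e1 in h7.
  by have := ltn_trans h7 (leq_trans h8 h9); rewrite ltnn.
have [t [A [B [hA hB hAB]]]] := count_main [ffun _ => col (beta' x0)]
  (fun x b => [ffun i => col (pi' x b i)]) hnum.
have hB' : #|{: 'I_m * 'I_m}| <= #|B| by rewrite card_prod card_ord.
have hAB' : forall x b, x \in A -> b \in B -> x != b /\ forall i, col (pi' x b i) = t i.
  move=> x b xA bB; have [nxb ht] := hAB x b xA bB; split => // i.
  by rewrite -ht ffunE.
have emb := embed beta_inj hpi0 hpimax hpie hpii hpib hA hB' hAB'.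
have := hfw' _ _ _ (hD (fun i => t i)) emb.
have := Km_clique m.
rewrite /m; lia.
Qed.

Theorem mainTheorem6 : decomposition_horizon ND.
Proof.
move=> C; split; [exact: hard_dir | exact: easy_dir].
Qed.
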